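(* Let $(a_n)_{n\in\mathbb{N}}$ be a C-finite sequence over $\mathbb{C}$. Let $c\in\mathbb{N}^{+}$ and $d,e\in\mathbb{Z}$. Then the sequence $b_n=a_{c\binom{n}{2}+dn+e}$ (defined for all $n$ large enough that the index is nonnegative) is C$^2$-finite over $\mathbb{C}$. In particular, $(a_{n^2})_n$ and $(a_{\binom{n}{2}})_n$ are C$^2$-finite.
   Context: Let $\mathbb{K}$ be a field. A sequence $(a_n)_{n\in\mathbb{N}}$ over $\mathbb{K}$ is C-finite if there exist $s\in\mathbb{N}$ and constants $c^{(0)},\dots,c^{(s-1)}\in\mathbb{K}$ such that $a_{n+s}=c^{(s-1)}a_{n+s-1}+\dots+c^{(0)}a_n$ for every $n\ge s$. A sequence $(a_n)$ over $\mathbb{K}$ is C$^2$-finite if there exist $s\in\mathbb{N}$ and C-finite sequences $(c^{(0)}_n),\dots,(c^{(s)}_n)$ over $\mathbb{K}$ with $c^{(s)}_n\neq 0$ for every $n$, such that $c^{(s)}_n a_{n+s}=c^{(s-1)}_n a_{n+s-1}+\dots+c^{(0)}_n a_n$ for every $n\ge s$. *)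

(* Defs.v *)
From HB Require Import structures.
From mathcomp Require Import all_boot all_order all_algebra.
Set Implicit Arguments. Unset Strict Implicit. Unset Printing Implicit Defensive.
Import Order.TTheory GRing.Theory Num.Theory.
Local Open Scope ring_scope.

Definition Cfinite (K : fieldType) (a : nat -> K) : Prop :=
  exists (s : nat) (c : 'I_s -> K),
    forall n : nat, (s <= n)%N ->
      a (n + s)%N = \sum_(i < s) c i * a (n + i)%N.

Definition C2finite (K : fieldType) (a : nat -> K) : Prop :=
  exists (s : nat) (cs : nat -> K) (c : 'I_s -> nat -> K),
    Cfinite cs /\ (forall i, Cfinite (c i)) /\ (forall n, cs n != 0) /\
    forall n : nat, (s <= n)%N ->
      cs n * a (n + s)%N = \sum_(i < s) c i n * a (n + i)%N.

Definition quad_index (c : nat) (d e : int) (n : nat) : int :=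
  (c * 'C(n, 2))%:Z + d * n%:Z + e.

(* Main.v *)
Require Import Defs.
From HB Require Import structures.
From mathcomp Require Import all_boot all_order all_algebra.
From mathcomp.real_closed Require Import mxtens.
From mathcomp Require Import zify ring.
Import Order.TTheory GRing.Theory Num.Theory.
Set Implicit Arguments. Unset Strict Implicit. Unset Printing Implicit Defensive.
Local Open Scope ring_scope.
Section MF.
Variable K : fieldType.

Lemma mulpow k (M : 'M[K]_k) a b : M ^+ a *m M ^+ b = M ^+ (a + b).
Proof. by rewrite mulmxE exprD. Qed.

Definition MFo (f : nat -> K) N := exists k (M : 'M[K]_k) (x : 'rV[K]_k) (y : 'cV[K]_k),
  forall n, (N <= n)%N -> f n = (x *m M ^+ (n - N) *m y) 0 0.

Definition MF (f : nat -> K) := exists N, MFo f N.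

Lemma MFo_up f N N' : MFo f N -> (N <= N')%N -> MFo f N'.
Proof.
move=> [k [M [x [y H]]]] hN.
exists k, M, (x *m M ^+ (N' - N)), y => n hn.
rewrite H ?(leq_trans hN hn) // -[x *m M ^+ (N' - N) *m _]mulmxA mulpow.
by congr (_ _ _ _); congr (_ *m _ *m _); congr (_ ^+ _); lia.
Qed.

Lemma MF_ev f g : MF f -> (exists N, forall n, (N <= n)%N -> f n = g n) -> MF g.
Proof.
move=> [N0 hf] [N' H'].
have [k [M [x [y H]]]] := MFo_up hf (leq_maxl N0 N').
exists (maxn N0 N'), k, M, x, y => n hn.
by rewrite -H' ?H // (leq_trans (leq_maxr N0 N') hn).
Qed.

Lemma MF_const c : MF (fun _ => c).
Proof.
exists 0%N, 1%N, 1, c%:M, 1 => n _.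
by rewrite expr1n mulmx1 mulmx1 mxE eqxx mulr1n.
Qed.

Lemma MF_shift f j : MF f -> MF (fun n => f (n + j)%N).
Proof.
move=> [N [k [M [x [y H]]]]].
exists N, k, M, (x *m M ^+ j), y => n hn.
rewrite H ?(leq_trans hn (leq_addr _ _)) //.
rewrite -[x *m M ^+ j *m _]mulmxA mulpow.
by congr (_ _ _ _); congr (_ *m _ *m _); congr (_ ^+ _); lia.
Qed.

Lemma MF_unshift f j : MF f -> MF (fun n => f (n - j)%N).
Proof.
move=> [N [k [M [x [y H]]]]].
exists (N + j)%N, k, M, x, y => n hn.
rewrite H; last by lia.
by congr (_ _ _ _); congr (_ *m _ *m _); congr (_ ^+ _); lia.
Qed.

Lemma MF_lin f a b : MF f -> MF (fun n => f (a * n + b)%N).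
Proof.
move=> hf; case: a => [|a].
  by apply: (@MF_ev (fun _ => f b)); [exact: MF_const | exists 0%N => n _; rewrite mul0n].
move: hf => [N [k [M [x [y H]]]]].
exists N, k, (M ^+ a.+1), (x *m M ^+ (a.+1 * N + b - N)), y => n hn.
rewrite H; last by nia.
rewrite -exprM -[x *m M ^+ (a.+1 * N + b - N) *m _]mulmxA mulpow.
by congr (_ _ _ _); congr (_ *m _ *m _); congr (_ ^+ _); nia.
Qed.

Lemma pow_block_diag k1 k2 (A : 'M[K]_k1) (B : 'M[K]_k2) n :
  (block_mx A 0 0 B : 'M_(k1 + k2)) ^+ n = block_mx (A ^+ n) 0 0 (B ^+ n).
Proof.
elim: n => [|n IH]; first by rewrite !expr0 -scalar_mx_block.
by rewrite !exprS IH -!mulmxE mulmx_block !(mulmx0, mul0mx, addr0, add0r).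
Qed.

Lemma MF_add f g : MF f -> MF g -> MF (fun n => f n + g n).
Proof.
move=> [N1 hf] [N2 hg].
have [k1 [M1 [x1 [y1 H1]]]] := MFo_up hf (leq_maxl N1 N2).
have [k2 [M2 [x2 [y2 H2]]]] := MFo_up hg (leq_maxr N1 N2).
exists (maxn N1 N2), (k1 + k2)%N, (block_mx M1 0 0 M2), (row_mx x1 x2), (col_mx y1 y2).
move=> n hn.
rewrite pow_block_diag mul_row_block !(mulmx0, mul0mx, addr0, add0r) mul_row_col.
by rewrite mxE H1 // H2.
Qed.

Lemma tens11 m p : (1 : 'M[K]_m) *t (1 : 'M[K]_p) = 1.
Proof.
apply/matrixP=> i j.
case: (mxtens_indexP i) => i1 i2; case: (mxtens_indexP j) => j1 j2.
rewrite tensmxE !mxE (inj_eq (can_inj (@mxtens_indexK _ _))) xpair_eqE.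
by case: (i1 == j1); case: (i2 == j2); rewrite ?mulr1 ?mulr0.
Qed.

Lemma tens_pow m p (A : 'M[K]_m) (B : 'M[K]_p) n :
  (A *t B) ^+ n = A ^+ n *t B ^+ n.
Proof.
elim: n => [|n IH]; first by rewrite !expr0 tens11.
by rewrite !exprS IH -!mulmxE tensmx_mul.
Qed.

Lemma MF_mul f g : MF f -> MF g -> MF (fun n => f n * g n).
Proof.
move=> [N1 hf] [N2 hg].
have [k1 [M1 [x1 [y1 H1]]]] := MFo_up hf (leq_maxl N1 N2).
have [k2 [M2 [x2 [y2 H2]]]] := MFo_up hg (leq_maxr N1 N2).
exists (maxn N1 N2), (k1 * k2)%N, (M1 *t M2), (x1 *t x2), (y1 *t y2).
move=> n hn.
set t := (n - _)%N.
have key : (x1 *t x2) *m (M1 ^+ t *t M2 ^+ t) *m (y1 *t y2)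
   = (x1 *m M1 ^+ t *m y1) *t (x2 *m M2 ^+ t *m y2) by rewrite !tensmx_mul.
rewrite tens_pow H1 // H2 // -(tensmxE (x1 *m M1 ^+ t *m y1)) -key.
have -> : (mxtens_index ((0 : 'I_1), (0 : 'I_1)) : 'I_(1 * 1)) = ord0 by apply: val_inj.
reflexivity.
Qed.

Lemma MF_sumseq (I : Type) (r : seq I) (F : I -> nat -> K) :
  (forall i, MF (F i)) -> MF (fun n => \sum_(i <- r) F i n).
Proof.
move=> hF; elim: r => [|i r IH].
  by apply: (@MF_ev (fun _ => 0)); [exact: MF_const | exists 0%N => n _; rewrite big_nil].
apply: (@MF_ev (fun n => F i n + \sum_(j <- r) F j n)); first exact: MF_add.
by exists 0%N => n _; rewrite big_cons.
Qed.

Lemma MF_sum m (F : 'I_m -> nat -> K) :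
  (forall i, MF (F i)) -> MF (fun n => \sum_(i < m) F i n).
Proof. exact: MF_sumseq. Qed.

Lemma MF_scale c f : MF f -> MF (fun n => c * f n).
Proof. by move=> hf; apply: MF_mul => //; exact: MF_const. Qed.

Lemma MF_opp f : MF f -> MF (fun n => - f n).
Proof.
move=> hf; apply: (@MF_ev (fun n => -1 * f n)); first exact: MF_scale.
by exists 0%N => n _; rewrite mulN1r.
Qed.

Lemma MF_mxentry a b k (A : 'M[K]_(a, k)) (M : 'M[K]_k) (B : 'M[K]_(k, b)) i j :
  MF (fun n => (A *m M ^+ n *m B) i j).
Proof.
exists 0%N, k, M, (row i A), (col j B) => n _.
by rewrite subn0 colE mulmxA -colE -!row_mul !mxE.
Qed.

Lemma MF_geom (l : K) a b : MF (fun n => l ^+ (a * n + b)).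
Proof.
apply: (@MF_lin (fun n => l ^+ n)).
exists 0%N, 1%N, l%:M, 1, 1 => n _.
rewrite mul1mx mulmx1 subn0.
have -> : (l%:M : 'M[K]_1) ^+ n = (l ^+ n)%:M.
  by elim: n => [|n IH]; rewrite ?expr0 // !exprS IH -mulmxE -scalar_mxM.
by rewrite mxE eqxx mulr1n.
Qed.

End MF.
Section EM.
Variable K : fieldType.

Lemma CH k (P : 'M[K]_k) : \sum_(i < k.+1) (char_poly P)`_i *: P ^+ i = 0.
Proof.
case: k P => [|k] P; first by apply/matrixP => [[]].
have := Cayley_Hamilton P.
rewrite /horner_mx /horner_morph (@horner_coef_wide _ k.+2); last first.
  by rewrite size_map_poly size_char_poly.
move=> h; rewrite -[in RHS]h; apply: eq_bigr => i _.
by rewrite coef_map /= -mulmxE mul_scalar_mx.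
Qed.

Definition EM a b (X : nat -> 'M[K]_(a, b)) := forall i j, MF (fun n => X n i j).

Lemma EM_ev a b (X Y : nat -> 'M[K]_(a, b)) : EM X ->
  (exists N, forall n, (N <= n)%N -> X n = Y n) -> EM Y.
Proof.
move=> hX [N hN] i j; apply: (MF_ev (hX i j)); exists N => n hn; by rewrite hN.
Qed.

Lemma EM_mul a b c (X : nat -> 'M[K]_(a, b)) (Y : nat -> 'M[K]_(b, c)) :
  EM X -> EM Y -> EM (fun n => X n *m Y n).
Proof.
move=> hX hY i j.
apply: (@MF_ev _ (fun n => \sum_l X n i l * Y n l j)).
  by apply: MF_sum => l; apply: MF_mul.
by exists 0%N => n _; rewrite mxE.
Qed.

Lemma EM_add a b (X Y : nat -> 'M[K]_(a, b)) :
  EM X -> EM Y -> EM (fun n => X n + Y n).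
Proof.
move=> hX hY i j; apply: (@MF_ev _ (fun n => X n i j + Y n i j)).
  exact: MF_add.
by exists 0%N => n _; rewrite mxE.
Qed.

Lemma EM_scal a b (c : nat -> K) (X : nat -> 'M[K]_(a, b)) :
  MF c -> EM X -> EM (fun n => c n *: X n).
Proof.
move=> hc hX i j; apply: (@MF_ev _ (fun n => c n * X n i j)).
  exact: MF_mul.
by exists 0%N => n _; rewrite mxE.
Qed.

Lemma EM_const a b (A : 'M[K]_(a, b)) : EM (fun _ => A).
Proof. move=> i j; exact: MF_const. Qed.

Lemma EM_pow k (M : 'M[K]_k) p q : EM (fun n => M ^+ (p * n + q)).
Proof.
move=> i j; apply: (@MF_ev _ (fun n => (1 *m M ^+ (p * n + q) *m 1) i j)).
  exact: (@MF_lin _ (fun n => (1 *m M ^+ n *m 1) i j) p q (MF_mxentry _ _ _ _ _)).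
by exists 0%N => n _; rewrite mul1mx mulmx1.
Qed.

Lemma EM_shift a b (X : nat -> 'M[K]_(a, b)) j : EM X -> EM (fun n => X (n + j)%N).
Proof. by move=> hX i l; exact: (MF_shift j (hX i l)). Qed.

Lemma EM_sumseq a b (I : Type) (r : seq I) (F : I -> nat -> 'M[K]_(a, b)) :
  (forall i, EM (F i)) -> EM (fun n => \sum_(i <- r) F i n).
Proof.
move=> hF i j; apply: (@MF_ev _ (fun n => \sum_(l <- r) F l n i j)).
  by apply: MF_sumseq => l; apply: hF.
by exists 0%N => n _; rewrite summxE.
Qed.

Definition VFo s (u : nat -> 'cV[K]_s) N := exists k (U : 'M[K]_(s, k)) (P : 'M[K]_k)
  (y : 'cV[K]_k), forall n, (N <= n)%N -> u n = U *m P ^+ (n - N) *m y.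
Definition VF s (u : nat -> 'cV[K]_s) := exists N, VFo u N.

Lemma VFo_up s (u : nat -> 'cV[K]_s) N N' : VFo u N -> (N <= N')%N -> VFo u N'.
Proof.
move=> [k [U [M [y H]]]] hN.
exists k, (U *m M ^+ (N' - N)), M, y => n hn.
rewrite H ?(leq_trans hN hn) // -[U *m M ^+ (N' - N) *m _]mulmxA mulpow.
by congr (_ *m _ *m _); congr (_ ^+ _); lia.
Qed.

Lemma VF_ev s (u v : nat -> 'cV[K]_s) : VF u ->
  (exists N, forall n, (N <= n)%N -> u n = v n) -> VF v.
Proof.
move=> [N0 hf] [N' H'].
have [k [M [x [y H]]]] := VFo_up hf (leq_maxl N0 N').
exists (maxn N0 N'), k, M, x, y => n hn.
by rewrite -H' ?H // (leq_trans (leq_maxr N0 N') hn).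
Qed.

Lemma VF_add s (u v : nat -> 'cV[K]_s) : VF u -> VF v -> VF (fun n => u n + v n).
Proof.
move=> [N1 hf] [N2 hg].
have [k1 [U1 [M1 [y1 H1]]]] := VFo_up hf (leq_maxl N1 N2).
have [k2 [U2 [M2 [y2 H2]]]] := VFo_up hg (leq_maxr N1 N2).
exists (maxn N1 N2), (k1 + k2)%N, (row_mx U1 U2), (block_mx M1 0 0 M2), (col_mx y1 y2).
move=> n hn.
rewrite pow_block_diag mul_row_block !(mulmx0, mul0mx, addr0, add0r) mul_row_col.
by rewrite H1 // H2.
Qed.

Lemma VF_scal s (h : nat -> K) (z : 'cV[K]_s) : MF h -> VF (fun n => h n *: z).
Proof.
move=> [N [k [M [x [y H]]]]].
exists N, k, (z *m x), M, y => n hn.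
rewrite H // -!mulmxA [x *m _]mulmxA.
by rewrite [x *m M ^+ (n - N) *m y in RHS]mx11_scalar mul_mx_scalar.
Qed.

Lemma VF_of_EM s (u : nat -> 'cV[K]_s) : EM u -> VF u.
Proof.
move=> hu.
apply: (@VF_ev _ (fun n => \sum_(i <- index_enum 'I_s) u n i 0 *: delta_mx i 0)); last first.
  exists 0%N => n _; rewrite [RHS]matrix_sum_delta.
  by apply: eq_bigr => i _; rewrite big_ord1.
elim: (index_enum _) => [|i r IH].
  apply: (@VF_ev _ (fun n => (fun _ => 0) n *: (0 : 'cV_s))).
    by apply: VF_scal; apply: MF_const.
  by exists 0%N => n _; rewrite big_nil scaler0.
apply: (@VF_ev _ (fun n => u n i 0 *: delta_mx i 0 + \sum_(j <- r) u n j 0 *: delta_mx j 0)).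
  by apply: VF_add => //; apply: VF_scal; apply: hu.
by exists 0%N => n _; rewrite big_cons.
Qed.

End EM.
Section Tl.
Variable K : fieldType.

Definition goodF s (F : seq ((nat -> K) * nat)) :=
  forall p, List.In p F -> MF p.1 /\ (p.2 < s)%N.

Definition Tl (g : nat -> K) := exists s N (F : seq ((nat -> K) * nat)),
  goodF s F /\
  forall n, (N <= n)%N -> g (n + s)%N = \sum_(p <- F) p.1 n * g (n + p.2)%N.

Lemma In_allpairs (A B : Type) (SA : seq A) (SB : seq B) x :
  List.In x [seq (a, b) | a <- SA, b <- SB] -> List.In x.1 SA /\ List.In x.2 SB.
Proof.
elim: SA => [|a SA IH] //= /List.in_app_iff [].
  by move=> /List.in_map_iff [b [<- hb]]; split => //; left.
by move=> /IH [h1 h2]; split => //; right.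
Qed.

Lemma Tl_ev g h : Tl g -> (exists N, forall n, (N <= n)%N -> g n = h n) -> Tl h.
Proof.
move=> [s [N [F [hF H]]]] [N' H'].
exists s, (maxn N N'), F; split => // n; rewrite geq_max => /andP[h1 h2].
rewrite -H' ?(leq_trans h2 (leq_addr _ _)) // H //.
by apply: eq_bigr => p _; rewrite H' // (leq_trans h2 (leq_addr _ _)).
Qed.

Lemma Tl_zero g N : (forall n, (N <= n)%N -> g n = 0) -> Tl g.
Proof.
move=> H; exists 0%N, N, [::]; split => // n hn.
by rewrite big_nil addn0 H.
Qed.

Lemma Tl_unshift g k : Tl (fun n => g (n + k)%N) -> Tl g.
Proof.
move=> [s [N [F [hF H]]]].
exists s, (N + k)%N, [seq ((fun m => p.1 (m - k)%N), p.2) | p <- F]; split.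
  move=> p /List.in_map_iff [q [<- hq]] /=; have [h1 h2] := hF q hq; split => //.
  exact: MF_unshift.
move=> m hm; rewrite big_map.
have := H (m - k)%N; rewrite (_ : (m - k + s + k = m + s)%N); last by lia.
move=> -> ; last by lia.
by apply: eq_bigr => p _ /=; congr (_ * g _); lia.
Qed.

Lemma Tl_comp g m (Fe : seq ((nat -> K) * nat)) : goodF m Fe ->
  Tl (fun n => g (n + m)%N - \sum_(p <- Fe) p.1 n * g (n + p.2)%N) -> Tl g.
Proof.
move=> hFe [s [N [Fl [hFl H]]]].
pose F1 := [seq (r.1, (r.2 + m)%N) | r <- Fl].
pose F2 := [seq ((fun n => - (rp.1.1 n * rp.2.1 (n + rp.1.2)%N)), (rp.1.2 + rp.2.2)%N)
           | rp <- [seq (r, pe) | r <- Fl, pe <- Fe]].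
pose F3 := [seq ((fun n => pe.1 (n + s)%N), (s + pe.2)%N) | pe <- Fe].
exists (s + m)%N, N, (F1 ++ F2 ++ F3); split.
  move=> p /List.in_app_iff [|/List.in_app_iff []].
  - move=> /List.in_map_iff [r [<- hr]] /=; have [h1 h2] := hFl r hr.
    by split => //; rewrite ltn_add2r.
  - move=> /List.in_map_iff [rp [<- /In_allpairs [hr hp]]] /=.
    have [h1 h2] := hFl _ hr; have [h3 h4] := hFe _ hp.
    split; first by apply: MF_opp; apply: MF_mul => //; apply: MF_shift.
    by rewrite -addSn leq_add // ltnW.
  - move=> /List.in_map_iff [pe [<- hp]] /=; have [h1 h2] := hFe _ hp.
    by split; [apply: MF_shift | rewrite ltn_add2l].
move=> n hn.
have E := H n hn; simpl in E.
rewrite !big_cat /= !big_map big_allpairs /=.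
have -> : g (n + (s + m))%N = (g (n + s + m)%N - \sum_(p <- Fe) p.1 (n + s)%N * g (n + s + p.2)%N)
   + \sum_(p <- Fe) p.1 (n + s)%N * g (n + s + p.2)%N by rewrite subrK addnA.
rewrite E addrA; congr (_ + _); last by apply: eq_bigr => p _; rewrite addnA.
rewrite -big_split /=; apply: eq_bigr => r _.
rewrite mulrBr mulr_sumr -sumrN addnA; congr (_ + _).
by apply: eq_bigr => pe _; rewrite /= mulNr mulrA addnA.
Qed.

End Tl.
Section Aux.
Variable K : fieldType.

Fixpoint Fr s (M : 'M[K]_s) (l : K) (t : nat) : 'M[K]_s :=
  if t is t'.+1 then M ^+ t' + l *: Fr M l t' else 0.

Lemma Fr_pow s (M : 'M[K]_s) l t : M ^+ t = (l ^+ t)%:M + (M - l%:M) *m Fr M l t.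
Proof.
elim: t => [|t IH]; first by rewrite /= mulmx0 addr0 expr0.
have E : (M - l%:M) *m Fr M l t = M ^+ t - (l ^+ t)%:M.
  by rewrite [M ^+ t in RHS]IH addrAC subrr add0r.
rewrite /= mulmxDr -scalemxAr E mulmxBl mul_scalar_mx scalerBr scale_scalar_mx -exprS.
rewrite exprS -mulmxE.
by rewrite -(addrA (M *m M ^+ t)) addKr subrKC.
Qed.

Lemma Big_pow s (M : 'M[K]_s) l t :
  (block_mx M 1%:M 0 l%:M : 'M_(s + s)) ^+ t
  = block_mx (M ^+ t) (Fr M l t) 0 (l ^+ t)%:M.
Proof.
elim: t => [|t IH]; first by rewrite !expr0 /= -scalar_mx_block.
rewrite exprSr IH -mulmxE mulmx_block /= !(mulmx0, mul0mx, addr0, add0r, mulmx1).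
by rewrite mul_mx_scalar -scalar_mxM -exprSr mulmxE -exprSr.
Qed.

Lemma Fr_as s (M : 'M[K]_s) l t : Fr M l t =
  row_mx 1%:M 0 *m (block_mx M 1%:M 0 l%:M : 'M_(s + s)) ^+ t *m col_mx 0 1%:M.
Proof.
rewrite Big_pow mul_row_block !(mulmx0, mul0mx, addr0, add0r, mul1mx) mul_row_col.
by rewrite mulmx0 add0r mulmx1.
Qed.

Lemma EM_Fr s (M : 'M[K]_s) l a b : EM (fun n => Fr M l (a * n + b)).
Proof.
move=> i j; apply: (@MF_ev _ (fun n => (row_mx 1%:M 0 *m (block_mx M 1%:M 0 l%:M : 'M_(s + s)) ^+ (a * n + b) *m col_mx 0 1%:M) i j)).
  exact: (@MF_lin _ (fun n => (row_mx 1%:M 0 *m (block_mx M 1%:M 0 l%:M : 'M_(s + s)) ^+ n *m col_mx 0 1%:M) i j) a b (MF_mxentry _ _ _ _ _)).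
by exists 0%N => n _; rewrite -Fr_as.
Qed.

Lemma commA s (M : 'M[K]_s) l t : (M - l%:M) *m M ^+ t = M ^+ t *m (M - l%:M).
Proof.
rewrite mulmxBl mulmxBr mul_mx_scalar mul_scalar_mx; congr (_ - _).
by rewrite mulmxE -exprS exprSr.
Qed.

Lemma core s (M : 'M[K]_s) (l : K) r (B0 : 'M[K]_(r, s)) (M' : 'M[K]_r)
  (w : 'rV[K]_s) (w' : 'rV[K]_r) :
  w *m (M - l%:M) = w' *m B0 -> (forall t, B0 *m M ^+ t = M' ^+ t *m B0) ->
  forall Q t (X : 'cV[K]_s), w *m M ^+ (Q + t) *m X
   = l ^+ t *: (w *m M ^+ Q *m X) + w' *m M' ^+ Q *m (B0 *m (Fr M l t *m X)).
Proof.
move=> hw hB Q t X.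
rewrite exprD -mulmxE [M ^+ t](Fr_pow _ l) (mulmxDr (M ^+ Q)) (mulmxDr w) mulmxDl.
rewrite mul_mx_scalar -scalemxAr -scalemxAl; congr (_ + _).
rewrite !mulmxA -(mulmxA w) -commA mulmxA hw -(mulmxA w') hB !mulmxA.
by [].
Qed.

End Aux.
Lemma binD2 n j : 'C(n + j, 2) = ('C(n, 2) + j * n + 'C(j, 2))%N.
Proof.
elim: j => [|j IH]; first by rewrite addn0 mul0n addn0 bin0n addn0.
rewrite addnS binS IH bin1 binS bin1; lia.
Qed.

Section Main.
Variable K : closedFieldType.
Variables c d e : nat.

Definition q n := (c * 'C(n, 2) + d * n + e)%N.

Lemma qD n j : (q (n + j) + e = q n + c * j * n + q j)%N.
Proof. rewrite /q binD2; nia. Qed.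

Lemma q_mono m m' : (m <= m')%N -> (q m <= q m')%N.
Proof.
move=> h; rewrite /q leq_add2r leq_add // ?leq_mul2l ?leq_bin2l ?h ?orbT //.
Qed.

Lemma qe j : (e <= q j)%N.
Proof. by rewrite /q leq_addl. Qed.

Lemma t_lin j n : (q (n + j) - q n = c * j * n + (q j - e))%N.
Proof. have := qD n j; have := qe j; lia. Qed.

Lemma T_lin i k n : (i <= k)%N ->
  (q (n + k) - q (n + i) = c * (k - i) * n + (q k - q i))%N.
Proof.
move=> hik; have := qD n k; have := qD n i; have := q_mono hik.
have : (c * i * n <= c * k * n)%N by rewrite leq_mul2r leq_mul2l hik !orbT.
rewrite !mulnBr !mulnBl; lia.
Qed.

Lemma mainT s : forall (M : 'M[K]_s) (w : 'rV[K]_s) (u : nat -> 'cV[K]_s), EM u ->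
  Tl (fun n => (w *m M ^+ q n *m u n) 0 0).
Proof.
elim/ltn_ind: s => s IH M w u hu.
case: s IH M w u hu => [|s'] IH M w u hu.
  by apply: (@Tl_zero _ _ 0%N) => n _; rewrite mxE big_ord0.
have [l hl] : exists l, root (char_poly M) l.
  by apply/closed_rootP; rewrite size_char_poly.
have /eigenvalueP [v0 hv0 v0nz] : eigenvalue M l by rewrite eigenvalue_root_char.
set A := M - l%:M.
have rk : (\rank A < s'.+1)%N.
  rewrite ltn_neqAle rank_leq_row andbT; apply/negP => hrf.
  have := @row_free_inj _ _ _ _ A hrf v0 0.
  rewrite mul0mx /A mulmxBr hv0 mul_mx_scalar subrr => /(_ erefl) h.
  by move: v0nz; rewrite h eqxx.
set r := \rank A.
set B0 := row_base A.
have [w' hw'] : exists w', w *m A = w' *m B0.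
  by apply/submxP; rewrite eq_row_base submxMl.
have [M' hM'] : exists M', B0 *m M = M' *m B0.
  apply/submxP; rewrite eq_row_base.
  rewrite /B0 (eqmxMr M (eq_row_base A)).
  have -> : A *m M = M *m A.
    by rewrite /A mulmxBl mulmxBr mul_mx_scalar mul_scalar_mx.
  exact: submxMl.
have hB t : B0 *m M ^+ t = M' ^+ t *m B0.
  elim: t => [|t IHt]; first by rewrite !expr0 mulmx1 mul1mx.
  by rewrite exprSr -mulmxE mulmxA IHt -mulmxA hM' mulmxA mulmxE -exprSr.
have [N0 [k [U [P [y Hu]]]]] := VF_of_EM hu.
pose chi := char_poly P.
have chik : chi`_k = 1.
  by have := char_poly_monic P; rewrite monicE lead_coefE size_char_poly => /eqP.
have Ru n : (N0 <= n)%N -> u (n + k)%N + \sum_(i < k) chi`_i *: u (n + i)%N = 0.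
  move=> hn.
  transitivity (U *m P ^+ (n - N0) *m (\sum_(i < k.+1) chi`_i *: P ^+ i) *m y);
    last by rewrite CH mulmx0 mul0mx.
  rewrite big_ord_recr /= chik scale1r addrC mulmxDr mulmxDl; congr (_ + _).
    rewrite Hu ?(leq_trans hn (leq_addr _ _)) // -[U *m P ^+ (n - N0) *m P ^+ k]mulmxA mulpow.
    by do 2 congr (_ *m _); congr (_ ^+ _); lia.
  rewrite mulmx_sumr mulmx_suml; apply: eq_bigr => i _.
  rewrite Hu ?(leq_trans hn (leq_addr _ _)) // -scalemxAr -scalemxAl.
  rewrite -[U *m P ^+ (n - N0) *m P ^+ i]mulmxA mulpow; congr (_ *: _).
  by do 2 congr (_ *m _); congr (_ ^+ _); lia.
pose T (i : nat) n := (q (n + k) - q (n + i))%N.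
pose t (j : nat) n := (q (n + j) - q n)%N.
pose v n := Fr M l (t k n) *m u (n + k)%N
  + \sum_(i < k) (chi`_i * l ^+ T i n) *: (Fr M l (t i n) *m u (n + i)%N).
pose Fe := [seq ((fun n => - (chi`_i * l ^+ T i n)), nat_of_ord i) | i : 'I_k <- index_enum 'I_k].
have hFe : goodF k Fe.
  move=> p /List.in_map_iff [i [<- _]] /=; split => //.
  apply: MF_opp; apply: MF_scale.
  apply: (MF_ev (MF_geom l (c * (k - i)) (q k - q i))).
  by exists 0%N => n _; rewrite /T T_lin // ltnW.
apply: (Tl_comp hFe).
have EMv : EM (fun n => B0 *m v n).
  apply: EM_mul; first exact: EM_const.
  apply: EM_add.
    apply: EM_mul; last exact: EM_shift.
    apply: (EM_ev (EM_Fr M l (c * k) (q k - e))).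
    by exists 0%N => n _; rewrite /t t_lin.
  apply: EM_sumseq => i; apply: EM_scal.
    apply: MF_scale; apply: (MF_ev (MF_geom l (c * (k - i)) (q k - q i))).
    by exists 0%N => n _; rewrite /T T_lin // ltnW.
  apply: EM_mul; last exact: EM_shift.
  apply: (EM_ev (EM_Fr M l (c * i) (q i - e))).
  by exists 0%N => n _; rewrite /t t_lin.
apply: (Tl_ev (IH _ rk M' w' (fun n => B0 *m v n) EMv)).
exists N0 => n hn.
pose X (j : nat) := w *m M ^+ q n *m u (n + j)%N.
pose Y (j : nat) := w' *m M' ^+ q n *m (B0 *m (Fr M l (t j n) *m u (n + j)%N)).
pose a (i : nat) := chi`_i * l ^+ T i n.
have Gs j : w *m M ^+ q (n + j) *m u (n + j)%N = l ^+ t j n *: X j + Y j.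
  have -> : q (n + j) = (q n + t j n)%N.
    by have := q_mono (leq_addr j n); rewrite /t; lia.
  exact: (core hw' hB).
have Tt (i : 'I_k) : (T i n + t i n = t k n)%N.
  have hik : (n + i <= n + k)%N by rewrite leq_add2l ltnW.
  have := q_mono (leq_addr i n); have := q_mono hik.
  rewrite /T /t; lia.
have L : w' *m M' ^+ q n *m (B0 *m v n) = Y k + \sum_(i < k) a i *: Y i.
  rewrite /v !mulmxDr !mulmx_sumr; congr (_ + _); apply: eq_bigr => i _.
  by rewrite -!scalemxAr.
have term (i : 'I_k) : a i *: (l ^+ t i n *: X i + Y i)
    = a i *: Y i + l ^+ t k n *: (w *m M ^+ q n *m (chi`_i *: u (n + i)%N)).
  rewrite scalerDr addrC; congr (_ + _).
  rewrite scalerA -scalemxAr scalerA /a -mulrA -exprD Tt mulrC.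
  by rewrite /X.
have Mx : w' *m M' ^+ q n *m (B0 *m v n)
    = w *m M ^+ q (n + k) *m u (n + k)%N
      + \sum_(i < k) a i *: (w *m M ^+ q (n + i) *m u (n + i)%N).
  rewrite L Gs; under [X in _ = _ + X]eq_bigr => i _ do rewrite Gs term.
  rewrite big_split /= -scaler_sumr.
  have -> : \sum_(i < k) w *m M ^+ q n *m (chi`_i *: u (n + i)%N)
       = w *m M ^+ q n *m (\sum_(i < k) chi`_i *: u (n + i)%N) by rewrite mulmx_sumr.
  rewrite [l ^+ _ *: X k + _]addrC addrACA -scalerDr /X -mulmxDr Ru //.
  by rewrite mulmx0 scaler0 addr0.
rewrite Mx mxE summxE /Fe big_map -sumrN; congr (_ + _).
by apply: eq_bigr => i _; rewrite mxE mulNr opprK.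
Qed.

End Main.
Section Conv.
Variable K : fieldType.

Lemma MF_sumseq_in (I : Type) (r : seq I) (F : I -> nat -> K) :
  (forall i, List.In i r -> MF (F i)) -> MF (fun n => \sum_(i <- r) F i n).
Proof.
elim: r => [|i r IH] hF.
  by apply: (@MF_ev _ (fun _ => 0)); [exact: MF_const | exists 0%N => n _; rewrite big_nil].
apply: (@MF_ev _ (fun n => F i n + \sum_(j <- r) F j n)).
  by apply: MF_add; [apply: hF; left | apply: IH => j hj; apply: hF; right].
by exists 0%N => n _; rewrite big_cons.
Qed.

Lemma MF_Cfinite (f : nat -> K) : MF f -> Cfinite f.
Proof.
move=> [N [k [M [x [y H]]]]].
pose chi := char_poly M.
have chik : chi`_k = 1.
  by have := char_poly_monic M; rewrite monicE lead_coefE size_char_poly => /eqP.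
have R n : (N <= n)%N -> f (n + k)%N = \sum_(i < k) (- chi`_i) * f (n + i)%N.
  move=> hn.
  have E : \sum_(i < k.+1) chi`_i * f (n + i)%N = 0.
    transitivity ((x *m M ^+ (n - N) *m (\sum_(i < k.+1) chi`_i *: M ^+ i) *m y) 0 0);
      last by rewrite CH mulmx0 mul0mx mxE.
    rewrite mulmx_sumr mulmx_suml summxE; apply: eq_bigr => i _.
    rewrite H ?(leq_trans hn (leq_addr _ _)) // -scalemxAr -scalemxAl.
    rewrite -[x *m M ^+ (n - N) *m M ^+ i]mulmxA mulpow [in RHS]mxE; congr (_ * _).
    by congr (_ _ _ _); congr (_ *m _ *m _); congr (_ ^+ _); lia.
  move: E; rewrite big_ord_recr /= chik mul1r => /eqP; rewrite addrC addr_eq0 => /eqP ->.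
  by rewrite -sumrN; apply: eq_bigr => i _; rewrite mulNr.
exists (N + k)%N, (fun i : 'I_(N + k) => if (i < N)%N then 0 else - chi`_(i - N)).
move=> n hn.
rewrite big_split_ord /= big1 ?add0r; last by move=> i _; rewrite ltn_ord mul0r.
rewrite addnA R; last by rewrite leq_addl.
apply: eq_bigr => i _; rewrite ltnNge leq_addr /=.
by rewrite (_ : (N + i - N = i)%N) ?addnA //; lia.
Qed.

Lemma Cfinite_MF (f : nat -> K) : Cfinite f -> MF f.
Proof.
move=> [s [cc H]].
case: s cc H => [|s] cc H.
  apply: (@MF_ev _ (fun _ => 0)); first exact: MF_const.
  by exists 0%N => n _; rewrite -[n]addn0 H // big_ord0.
pose R m := \row_(i < s.+1) f (m + i)%N.
pose C : 'M[K]_s.+1 := \matrix_(i, j) (if (j.+1 < s.+1)%N then ((i : nat) == j.+1)%:R else cc i).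
have RS m : (s.+1 <= m)%N -> R m.+1 = R m *m C.
  move=> hm; apply/matrixP => i j; rewrite /R /C !mxE.
  have [hj|hj] := boolP (j.+1 < s.+1)%N.
    rewrite (eq_bigr (fun l : 'I_s.+1 => f (m + l)%N * ((l : nat) == j.+1)%:R));
      last by move=> l _; rewrite !mxE hj.
    rewrite (bigD1 (Ordinal hj)) //= eqxx mulr1 big1 ?addr0; first by rewrite addnS.
    move=> l hl; rewrite (_ : ((l : nat) == j.+1) = false) ?mulr0 //.
    apply/negP => /eqP hl'; move: hl; rewrite (_ : l = Ordinal hj) ?eqxx //; exact: val_inj.
  rewrite (eq_bigr (fun l : 'I_s.+1 => f (m + l)%N * cc l));
    last by move=> l _; rewrite !mxE (negPf hj).
  have -> : (j : nat) = s by move: (ltn_ord j) hj; rewrite ltnS; lia.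
  rewrite addSnnS H //; apply: eq_bigr => l _; exact: mulrC.
exists s.+1, s.+1, C, (R s.+1), (delta_mx 0 0) => n hn.
have -> : f n = (R n *m (delta_mx 0 0 : 'cV[K]_s.+1)) 0 0.
  by rewrite -colE !mxE addn0.
congr (_ _ _ _); congr (_ *m _).
rewrite -(subnK hn); elim: (n - s.+1)%N => [|p IHp]; first by rewrite add0n subnn expr0 mulmx1.
rewrite addSn RS ?leq_addl // IHp subSn ?leq_addl // exprSr -mulmxA mulmxE.
by rewrite (_ : (p + s.+1 - s.+1 = p)%N) // addnK.
Qed.

Lemma Tl_C2 (g : nat -> K) : Tl g -> C2finite g.
Proof.
move=> [s [N [F [hF H]]]].
pose co (i : 'I_(N + s)) n :=
  if (i < N)%N then 0 else \sum_(p <- F | p.2 == (i - N)%N) p.1 (n + N)%N.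
exists (N + s)%N, (fun _ => 1), co; split; first exact/MF_Cfinite/MF_const.
split.
  move=> i; apply: MF_Cfinite; rewrite /co; have [hi|hi] := boolP (i < N)%N.
    by apply: (MF_ev (MF_const 0)); exists 0%N.
  apply: (@MF_ev _ (fun n => \sum_(p <- [seq p <- F | p.2 == (i - N)%N]) p.1 (n + N)%N)).
    apply: MF_sumseq_in => p /List.filter_In [hp _]; apply: MF_shift; exact: (hF p hp).1.
  by exists 0%N => n _; rewrite big_filter.
split; first by move=> n; exact: oner_neq0.
move=> n _.
rewrite mul1r big_split_ord /= big1 ?add0r; last by move=> i _; rewrite /co /= ltn_ord mul0r.
rewrite [(n + _)%N]addnA H ?leq_addl //.
have hF' : forall p, List.In p F -> (p.2 < s)%N by move=> p /hF [].
rewrite [RHS](eq_bigr (fun i : 'I_s =>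
   (\sum_(p <- F | p.2 == (i : nat)) p.1 (n + N)%N) * g (n + N + i)%N)); last first.
  by move=> i _; rewrite /co /= ltnNge leq_addr /= addKn addnA.
elim: F hF' {hF H co} => [|p F IH] hF'.
  by rewrite big_nil big1 // => i _; rewrite big_nil mul0r.
rewrite big_cons IH; last by move=> p' hp'; apply: hF'; right.
have hp : (p.2 < s)%N by apply: hF'; left.
rewrite (bigD1 (Ordinal hp)) //= [in RHS](bigD1 (Ordinal hp)) //=.
rewrite (big_cons _ _ p) eqxx mulrDl -addrA; congr (_ + _); congr (_ + _).
apply: eq_bigr => i hi; rewrite big_cons.
rewrite (_ : (p.2 == i) = false) //; apply/negP => /eqP hpi; move: hi.
by rewrite (_ : i = Ordinal hp) ?eqxx //; apply: val_inj.
Qed.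

End Conv.
Lemma bin2_2 n : ('C(n, 2) * 2 = n * n.-1)%N.
Proof.
elim: n => [|n IH] //; rewrite binS bin1 mulnDl IH; case: n {IH} => [|n] //=; nia.
Qed.

Lemma part1 (K : closedFieldType) (a : nat -> K) (ha : Cfinite a) :
  forall (c : nat) (d e : int), (0 < c)%N ->
     forall b : nat -> K,
       (forall n : nat, 0 <= quad_index c d e n ->
          b n = a `|quad_index c d e n|%N) ->
       C2finite b.
Proof.
move=> c d e hc b hb.
have [N0 [k [Mc [x [y Ha]]]]] := Cfinite_MF ha.
have [kk [hC [hd1 hk1]]] : exists kk, ('C(kk, 2) = kk * (`|d| + `|e| + N0))%N
   /\ (`|d| <= kk)%N /\ (1 <= kk)%N.
  exists (2 * (`|d| + `|e| + N0)).+1; split; last by split => //; lia.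
  by have := bin2_2 (2 * (`|d| + `|e| + N0)).+1 => /=; nia.
have hkk : (kk <= c * kk)%N by rewrite leq_pmull.
have [D hD] : exists D : nat, D%:Z = (c * kk)%:Z + d.
  exists (absz ((c * kk)%:Z + d)); rewrite abszE ger0_norm //; lia.
have [E hE] : exists E : nat, E%:Z = quad_index c d e kk.
  exists (absz (quad_index c d e kk)); rewrite abszE ger0_norm //.
  rewrite /quad_index hC.
  have h1 : (kk * (`|d| + `|e| + N0) <= c * (kk * (`|d| + `|e| + N0)))%N by rewrite leq_pmull.
  nia.
have hEN : (N0 <= E)%N.
  rewrite -lez_nat hE /quad_index hC.
  have h1 : (kk * (`|d| + `|e| + N0) <= c * (kk * (`|d| + `|e| + N0)))%N by rewrite leq_pmull.
  nia.
have hq n : quad_index c d e (n + kk) = ((c * 'C(n, 2) + D * n + E)%N)%:Z.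
  rewrite !PoszD !PoszM hD hE /quad_index binD2 !PoszD !PoszM; ring.
apply: Tl_C2; apply: (@Tl_unshift _ _ kk).
apply: (Tl_ev (mainT c D (E - N0) Mc x (EM_const y))).
exists 0%N => n _.
rewrite hb; last by rewrite hq.
rewrite hq absz_nat Ha; last by apply: leq_trans hEN (leq_addl _ _).
by rewrite /q; congr (_ _ _ _); do 2 congr (_ *m _); congr (_ ^+ _); lia.
Qed.
Unset Implicit Arguments.
Theorem theorem1 (K : closedFieldType) (hK : [pchar K] =i pred0)
    (a : nat -> K) (ha : Cfinite a) :
  (forall (c : nat) (d e : int), (0 < c)%N ->
     forall b : nat -> K,
       (forall n : nat, 0 <= quad_index c d e n ->
          b n = a `|quad_index c d e n|%N) ->
       C2finite b)
  /\ C2finite (fun n => a (n ^ 2)%N)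
  /\ C2finite (fun n => a 'C(n, 2)).
Proof.
split; first exact: part1.
split.
  apply: (@part1 K a ha 2 1 0 erefl (fun n => a (n ^ 2)%N)) => n _; congr a.
  rewrite /quad_index mul1r addr0 -PoszD absz_nat.
  have := bin2_2 n; case: n => [|n] //=; nia.
apply: (@part1 K a ha 1 0 0 erefl (fun n => a 'C(n, 2))) => n _; congr a.
by rewrite /quad_index mul0r !addr0 absz_nat mul1n.
Qed.
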